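(* For every bracket pattern $w$, $\langle\!\langle w\rangle\!\rangle=\{w'\mid w'\text{ bracket pattern},\ A(w')\subseteq A(w)\}$.
   Context: $\mathbb N=\{1,2,\dots\}$, $\mathbb N_0=\mathbb N\cup\{0\}$. A bracket pattern is a non-empty finite subset $w\subseteq\mathbb N$; $\|w\|:=\max(w)$. For bracket patterns $w,w'$: superposition $w\cup w'$; for $j\in w$ the projection $\cap_j w:=\{i\in w\mid i\le j\}$; the dual $w^\dagger:=\{\|w\|-i\mid i\in\mathbb N_0,\ i<\|w\|,\ i\notin w\}$. A bracket pattern category is a set of bracket patterns closed under superposition, duals and projections; $\langle\!\langle w\rangle\!\rangle$ denotes the smallest bracket pattern category containing $w$. The completion of a bracket pattern $w$ is $A(w):=\{j-i\mid j\in w,\ i\in\mathbb N_0,\ i\notin w,\ i<j\}$. *)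

(* Defs.v *)
From mathcomp Require Import all_boot.
From mathcomp Require Import finmap.
Set Implicit Arguments. Unset Strict Implicit. Unset Printing Implicit Defensive.
Local Open Scope fset_scope.

Definition is_bp (w : {fset nat}) : Prop := w != fset0 /\ 0 \notin w.

Definition bnorm (w : {fset nat}) : nat := \max_(i <- w) i.

(* superposition is fset union `|` *)

Definition bproj (j : nat) (w : {fset nat}) : {fset nat} := [fset i in w | i <= j].

Definition bdual (w : {fset nat}) : {fset nat} :=
  [fset bnorm w - i | i in iota 0 (bnorm w) & i \notin w].

Definition completion (w : {fset nat}) (d : nat) : Prop :=
  exists j i, [/\ j \in w, i \notin w, i < j & d = j - i].

Definition is_bp_category (C : {fset nat} -> Prop) : Prop :=
  [/\ (forall w, C w -> is_bp w),
      (forall w1 w2, C w1 -> C w2 -> C (w1 `|` w2)),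
      (forall w, C w -> C (bdual w)) &
      (forall w j, C w -> j \in w -> C (bproj j w))].

Definition generated_cat (w : {fset nat}) (w' : {fset nat}) : Prop :=
  forall C, is_bp_category C -> C w -> C w'.

(* Main.v *)
Require Import Defs.
From mathcomp Require Import all_boot.
From mathcomp Require Import finmap zify.
Local Open Scope fset_scope.
Set Implicit Arguments. Unset Strict Implicit.

Lemma dualE (w : {fset nat}) x : (x \in bdual w) = (0 < x <= bnorm w) && (bnorm w - x \notin w).
Proof.
apply/imfsetP/idP => /=.
- case=> i; rewrite !inE mem_iota /= add0n => /andP[Hi Hw] ->.
  have -> : bnorm w - (bnorm w - i) = i by lia.
  rewrite Hw andbT; lia.
- case/andP => Hx Hw; exists (bnorm w - x) => /=; last by lia.
  rewrite !inE mem_iota Hw andbT; lia.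
Qed.

Lemma projE (w : {fset nat}) j x : (x \in bproj j w) = (x \in w) && (x <= j).
Proof. by rewrite /bproj !inE. Qed.

Lemma bnorm_ub (w : {fset nat}) x : x \in w -> x <= bnorm w.
Proof.
move=> Hx; have : x \in enum_fset w by [].
rewrite /bnorm; elim: (enum_fset w) => [|a s IH] //=.
rewrite big_cons inE => /orP[/eqP->|/IH]; first exact: leq_maxl.
by move=> h; rewrite leq_max h orbT.
Qed.

Lemma seq_max_in (s : seq nat) : s != [::] -> \max_(i <- s) i \in s.
Proof.
elim: s => [|a s IH] //= _.
rewrite big_cons inE.
case: s IH => [|b s] IH; first by rewrite big_nil maxn0 eqxx.
have HM := IH isT; rewrite /maxn; case: ifP => _; [by rewrite HM orbT | by rewrite eqxx].
Qed.

Lemma bnorm_in (w : {fset nat}) : w != fset0 -> bnorm w \in w.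
Proof.
move=> H; have : (enum_fset w) != [::].
  apply: contra H => /eqP E; apply/eqP/fsetP => x; rewrite inE.
  by apply/idP => Hx; have : x \in enum_fset w by []; rewrite E.
move/seq_max_in => h; exact: h.
Qed.

Lemma bnorm_eq (w : {fset nat}) n : n \in w -> (forall x, x \in w -> x <= n) -> bnorm w = n.
Proof.
move=> Hn Hx; have := bnorm_ub Hn.
have Hne : w != fset0 by apply/eqP => E; rewrite E inE in Hn.
have := Hx _ (bnorm_in Hne); lia.
Qed.

Lemma bp_pos (w : {fset nat}) x : is_bp w -> x \in w -> 0 < x.
Proof. case=> _ H0 Hx; case: x Hx => // Hx; by rewrite Hx in H0. Qed.

Lemma bp_norm_in (w : {fset nat}) : is_bp w -> bnorm w \in w.
Proof. by case=> H _; apply: bnorm_in. Qed.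

Lemma bp_norm_pos (w : {fset nat}) : is_bp w -> 0 < bnorm w.
Proof. move=> H; exact: bp_pos H (bp_norm_in H). Qed.

Lemma proj_bp (w : {fset nat}) j : is_bp w -> j \in w -> is_bp (bproj j w) /\ bnorm (bproj j w) = j.
Proof.
move=> H Hj.
have Hjp : j \in bproj j w by rewrite projE Hj leqnn.
split; last by apply: bnorm_eq => // x; rewrite projE => /andP[].
split; first by apply/eqP => E; rewrite E inE in Hjp.
by rewrite projE negb_and; case: H => _ ->.
Qed.

Lemma dual_bp (w : {fset nat}) : is_bp w -> is_bp (bdual w) /\ bnorm (bdual w) = bnorm w.
Proof.
move=> H; have Hp := bp_norm_pos H.
have Hn : bnorm w \in bdual w by rewrite dualE subnn Hp leqnn; case: H.
split; last by apply: bnorm_eq => // x; rewrite dualE => /andP[/andP[]].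
split; first by apply/eqP => E; rewrite E inE in Hn.
by rewrite dualE.
Qed.

Lemma dual_inv (w : {fset nat}) : is_bp w -> bdual (bdual w) = w.
Proof.
move=> H; have [_ En] := dual_bp H.
apply/fsetP => x; rewrite dualE En dualE.
have Hn := bp_norm_in H.
case Hx: (x \in w).
  have := bp_pos H Hx; have := bnorm_ub Hx.
  have -> : bnorm w - (bnorm w - x) = x by have := bnorm_ub Hx; lia.
  by rewrite Hx; lia.
case: (leqP x (bnorm w)) => Hxn; last by rewrite andbF.
case: x Hx Hxn => [|x] Hx Hxn //=.
have -> : bnorm w - (bnorm w - x.+1) = x.+1 by lia.
rewrite Hx /= andbT.
case E: (x.+1 == bnorm w); first by move/eqP: E => E; rewrite -E Hx in Hn.
move/negbT: E => E; apply/negbF; lia.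
Qed.

Lemma dual_compl (w : {fset nat}) d : is_bp w -> completion (bdual w) d -> completion w d.
Proof.
move=> H [a [b [Ha Hb Hab ->]]].
move: Ha; rewrite dualE => /andP[/andP[Ha0 Han] Hna].
exists (bnorm w - b), (bnorm w - a); split => //; last by lia.
move: Hb; rewrite dualE negb_and negbK.
case: b Hab => [|b] Hab; first by rewrite subn0 => _; exact: bp_norm_in.
case/orP => //; lia.
by lia.
Qed.

Lemma proj_compl (w : {fset nat}) j d : completion (bproj j w) d -> completion w d.
Proof.
move=> [a [b [Ha Hb Hab ->]]]; move: Ha Hb; rewrite !projE => /andP[Ha Haj].
rewrite negb_and => /orP[Hb|Hb]; first by exists a, b.
lia.
Qed.

Lemma union_compl (u v : {fset nat}) d : completion (u `|` v) d -> completion u d \/ completion v d.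
Proof.
move=> [a [b [Ha Hb Hab ->]]]; move: Ha Hb; rewrite !inE negb_or => /orP[Ha|Ha] /andP[Hbu Hbv].
by left; exists a, b.
by right; exists a, b.
Qed.

Lemma union_bp (u v : {fset nat}) : is_bp u -> is_bp v -> is_bp (u `|` v).
Proof.
case=> Hu Hu0 [Hv Hv0]; split; last by rewrite inE negb_or Hu0.
apply: contra Hu => /eqP E; apply/eqP/fsetP => x; rewrite inE.
apply/negbTE/negP => Hx; have : x \in u `|` v by rewrite inE Hx.
by rewrite E inE.
Qed.

Lemma foldrE (v Q : {fset nat}) (s : seq nat) x :
  (x \in foldr (fun j acc => bproj j v `|` acc) Q s) = (x \in Q) || has (fun j => x \in bproj j v) s.
Proof.
elim: s => [|a s IH] /=; first by rewrite orbF.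
by rewrite inE IH orbCA.
Qed.

Lemma Lcover (C : {fset nat} -> Prop) (Q v : {fset nat}) :
  is_bp_category C -> C Q -> bnorm Q = bnorm v -> (forall x, x \in Q -> x \in v) ->
  (forall j, j \in v -> j < bnorm v -> C (bproj j v)) -> C v.
Proof.
case=> Hbp HU HD HP HQ En Hsub Hj.
have Hs : forall s : seq nat, all (fun j => (j \in v) && (j < bnorm v)) s ->
    C (foldr (fun j acc => bproj j v `|` acc) Q s).
  elim=> [|a s IH] //= /andP[/andP[Ha Han] Hall].
  by apply: HU; [exact: Hj | exact: IH].
have := Hs [seq j <- enum_fset v | j < bnorm v].
have -> : foldr (fun j acc => bproj j v `|` acc) Q [seq j <- enum_fset v | j < bnorm v] = v.
  apply/fsetP => x; rewrite foldrE.
  apply/idP/idP.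
    case/orP => [/Hsub //|/hasP[j _]]; by rewrite projE => /andP[].
  move=> Hx; case: (ltnP x (bnorm v)) => Hxn.
    apply/orP; right; apply/hasP; exists x; last by rewrite projE Hx leqnn.
    by rewrite mem_filter Hxn.
  have -> : x = bnorm Q by have := bnorm_ub Hx; rewrite En; lia.
  by rewrite bp_norm_in //; apply: Hbp.
apply; apply/allP => j; rewrite mem_filter => /andP[-> Hv]; by rewrite andbT.
Qed.

Lemma main (C : {fset nat} -> Prop) (w : {fset nat}) :
  is_bp_category C -> C w -> is_bp w -> forall n u, is_bp u -> bnorm u = n ->
  (forall d, completion u d -> completion w d) -> C u.
Proof.
move=> HC Cw bw n; elim/ltn_ind: n => n IH u bu En Hu.
have [Hbp HU HD HP] := HC.
have IHv : forall v, bnorm v = n -> (forall d, completion v d -> completion w d) ->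
    is_bp v -> forall j, j \in v -> j < bnorm v -> C (bproj j v).
  move=> v Ev Hv bv j Hj Hjn; have [bpj Epj] := proj_bp bv Hj.
  apply: (IH j); rewrite -?Ev //.
  by move=> d /proj_compl; apply: Hv.
have Hun : completion u n.
  exists n, 0; split => //; first by rewrite -En; apply: bp_norm_in.
  by case: bu. by rewrite -En; apply: bp_norm_pos.
  by rewrite subn0.
have [j [i [Hj Hi Hij Hn]]] := Hu _ Hun.
have [bp1 E1] := proj_bp bw Hj.
have [bp2 E2] := dual_bp bp1.
have Hn2 : n \in bdual (bproj j w).
  rewrite dualE E1 Hn projE negb_and.
  have -> : j - (j - i) = i by lia.
  by rewrite Hi /=; lia.
have [bp3 E3] := proj_bp bp2 Hn2.
set P3 := bproj n (bdual (bproj j w)).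
have CP3 : C P3.
  apply: (HP) => //; apply: (HD); exact: HP.
have AP3 : forall d, completion P3 d -> completion w d.
  move=> d /proj_compl /(dual_compl bp1) /proj_compl //.
set M := P3 `|` u.
have bM : is_bp M by apply: union_bp.
have EM : bnorm M = n.
  apply: bnorm_eq; first by rewrite inE -E3 bp_norm_in.
  move=> x; rewrite inE => /orP[] /bnorm_ub; rewrite ?E3 ?En //.
have AM : forall d, completion M d -> completion w d.
  by move=> d /union_compl [/AP3|/Hu].
have CM : C M.
  apply: (Lcover (Q := P3)) => //; first by rewrite E3 EM.
    by move=> x Hx; rewrite inE Hx.
  by apply: IHv.
have [bdu Edu] := dual_bp bu.
have [bdM EdM] := dual_bp bM.
have Cdu : C (bdual u).
  apply: (Lcover (Q := bdual M)) => //.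
  - by apply: HD.
  - by rewrite EdM Edu EM En.
  - move=> x; rewrite !dualE EM En => /andP[-> H]; apply: contra H.
    by rewrite inE => ->; rewrite orbT.
  - apply: (IHv) => //; first by rewrite Edu.
    by move=> d /(dual_compl bu); apply: Hu.
by rewrite -(dual_inv bu); apply: HD.
Qed.

Theorem lemma7p9 (w : {fset nat}) :
  is_bp w ->
  forall w' : {fset nat},
    generated_cat w w' <-> (is_bp w' /\ (forall d, completion w' d -> completion w d)).
Proof.
move=> bw w'; split.
  move=> H; apply: (H (fun u => is_bp u /\ (forall d, completion u d -> completion w d))); last by split.
  split.
  - by move=> u [].
  - move=> u v [bu Hu] [bv Hv]; split; first exact: union_bp.
    by move=> d /union_compl [/Hu|/Hv].
  - move=> u [bu Hu]; split; first by case: (dual_bp bu).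
    by move=> d /(dual_compl bu) /Hu.
  - move=> u j [bu Hu] Hj; split; first by case: (proj_bp bu Hj).
    by move=> d /proj_compl /Hu.
case=> bw' Hw' C HC Cw.
exact: (main HC Cw bw bw' (erefl _) Hw').
Qed.
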